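(* For every $\epsilon>0$ there exists a constant $c_1>0$ with the following property. For each $v\in V$, each $w\in E^*$ with $i(w)=v$, each $k\ge1$ and each $y\in\Sigma_Y^*\setminus\{\emptyset\}$: $$c_1^{-1}m^{k(\eta(v,x_w,y_w)-\epsilon)}\le N_{k+|w|}\big(\pi(X_v\cap\psi_w((0,1)^2))\big)\le c_1m^{k(\eta(v,x_w,y_w)+\epsilon)},$$ and, whenever $\pi(X_v\cap\psi_w((0,1)^2))\cap\phi_w(I_y)\neq\emptyset$, $$c_1^{-1}m^{k(\theta(v,x_w,y_w,y)-\epsilon)}\le N_{k+|w|+|y|}\big(\pi(X_v\cap\psi_w((0,1)^2))\cap\phi_w(I_y)\big)\le c_1m^{k(\theta(v,x_w,y_w,y)+\epsilon)}.$$
   Context: Let $G=(V,E)$ be a finite directed graph (loops and multiple edges allowed), with initial/terminal vertex maps $i,t$, where every vertex has an outgoing edge. Fix positive integers $n>m$ and for each $e\in E$ a pair $(x_e,y_e)\in\{0,\dots,n-1\}\times\{0,\dots,m-1\}$. Let $\psi_e(\xi_1,\xi_2)=((\xi_1+x_e)/n,(\xi_2+y_e)/m)$. Then $\{X_v\}$ is the unique family of nonempty compact subsets of $[0,1]^2$ with $X_v=\bigcup_{e:\,i(e)=v}\psi_e(X_{t(e)})$. No separation condition is assumed. $E^*$ is the set of finite admissible words $w=w_1\cdots w_k$ ($t(w_j)=i(w_{j+1})$), including the empty word. $|w|$ is the length, $i(w)=i(w_1)$, $t(w)=t(w_k)$, $\psi_w=\psi_{w_1}\circ\cdots\circ\psi_{w_k}$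 ($\psi_\emptyset=\mathrm{id}$), $x_w=x_{w_1}\cdots x_{w_k}$, $y_w=y_{w_1}\cdots y_{w_k}$. $\Sigma_X=\{0,\dots,n-1\}$, $\Sigma_Y=\{0,\dots,m-1\}$, $\Sigma_Y^*$ is the set of finite words over $\Sigma_Y$ including $\emptyset$. $\pi(\xi_1,\xi_2)=\xi_2$, $\phi_e(s)=(s+y_e)/m$, $\phi_w=\phi_{w_1}\circ\cdots\circ\phi_{w_k}$. For $y=y_1\cdots y_l\in\Sigma_Y^l$, $l\ge1$, $I_y=(\sum_{i=1}^l y_im^{-i},\sum_{i=1}^ly_im^{-i}+m^{-l})$. For a bounded $F\subseteq\mathbb R$, $N_k(F)$ is the least number of intervals $[j/m^k,(j+1)/m^k]$, $j\in\mathbb Z$, covering $F$. $\eta(v,x,y)$ (for $(x,y)\in\Sigma_X^k\times\Sigma_Y^k$): equals $\dim_B\pi(X_v\cap\psi_w((0,1)^2))$ if some $w\in E^*$ has $i(w)=v$ and $(x_w,y_w)=(x,y)$, and $0$ otherwise. $\theta(v,x,y,y')$ (for $y'\in\Sigma_Y^*$): equals $\eta(v,x,y)$ if $y'=\emptyset$; equals $\dim_B\big(\pi(X_v\cap\psi_w((0,1)^2))\cap\phi_w(I_{y'})\big)$ if $y'\ne\emptyset$ and such a $w$ exists; equals $0$ otherwise. *)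

(* Defs.v *)
From Stdlib Require Import Reals List ClassicalEpsilon.
From Coquelicot Require Import Coquelicot.
Open Scope R_scope.

Definition psi_e (n m : nat) (xe ye : nat) (p : R * R) : R * R :=
  ((fst p + INR xe) / INR n, (snd p + INR ye) / INR m).

Definition phi_e (m : nat) (ye : nat) (s : R) : R := (s + INR ye) / INR m.

Fixpoint admissible {V E : Type} (i t : E -> V) (w : list E) : Prop :=
  match w with
  | nil => True
  | e :: w' =>
      match w' with nil => True | e' :: _ => t e = i e' end /\ admissible i t w'
  end.

Definition word_from {V E : Type} (i t : E -> V) (v : V) (w : list E) : Prop :=
  admissible i t w /\ match w with nil => True | e :: _ => i e = v end.

Definition psi_w {E : Type} (n m : nat) (xl yl : E -> nat) (w : list E)
  : R * R -> R * R :=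
  fold_right (fun e f => fun p => psi_e n m (xl e) (yl e) (f p)) (fun p => p) w.

Definition phi_w {E : Type} (m : nat) (yl : E -> nat) (w : list E) : R -> R :=
  fold_right (fun e f => fun s => phi_e m (yl e) (f s)) (fun s => s) w.

Definition open_square (q : R * R) : Prop :=
  0 < fst q < 1 /\ 0 < snd q < 1.

Definition piece {E : Type} (n m : nat) (xl yl : E -> nat)
  (Xv : R * R -> Prop) (w : list E) : R -> Prop :=
  fun s => exists p, Xv p /\ (exists q, open_square q /\ p = psi_w n m xl yl w q)
                     /\ snd p = s.

(* sum_{i=1}^l y_i m^{-i} *)
Fixpoint adic (m : nat) (y : list nat) : R :=
  match y with
  | nil => 0
  | d :: y' => (INR d + adic m y') / INR m
  end.

Definition I_y (m : nat) (y : list nat) : R -> Prop :=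
  fun u => adic m y < u < adic m y + / (INR m ^ length y).

Definition piece_y {E : Type} (n m : nat) (xl yl : E -> nat)
  (Xv : R * R -> Prop) (w : list E) (y : list nat) : R -> Prop :=
  fun s => piece n m xl yl Xv w s /\ exists u, I_y m y u /\ s = phi_w m yl w u.

Definition covers (m k : nat) (F : R -> Prop) (J : list Z) : Prop :=
  forall s, F s -> exists j, In j J /\
    IZR j / INR m ^ k <= s <= (IZR j + 1) / INR m ^ k.

Definition is_Nk (m k : nat) (F : R -> Prop) (N : nat) : Prop :=
  (exists J, length J = N /\ covers m k F J) /\
  (forall J, covers m k F J -> (N <= length J)%nat).

Definition Nk (m k : nat) (F : R -> Prop) : nat :=
  epsilon (inhabits 0%nat) (is_Nk m k F).

Definition dimB (m : nat) (F : R -> Prop) : R :=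
  real (Lim_seq (fun k => ln (INR (Nk m k F)) / (INR k * ln (INR m)))).

Definition label_witness {V E : Type} (i t : E -> V) (xl yl : E -> nat)
  (v : V) (xs ys : list nat) (w : list E) : Prop :=
  word_from i t v w /\ map xl w = xs /\ map yl w = ys.

Definition eta {V E : Type} (i t : E -> V) (n m : nat) (xl yl : E -> nat)
  (X : V -> R * R -> Prop) (v : V) (xs ys : list nat) : R :=
  match excluded_middle_informative
          (exists w, label_witness i t xl yl v xs ys w) with
  | left H =>
      dimB m (piece n m xl yl (X v) (proj1_sig (constructive_indefinite_description _ H)))
  | right _ => 0
  end.

Definition theta {V E : Type} (i t : E -> V) (n m : nat) (xl yl : E -> nat)
  (X : V -> R * R -> Prop) (v : V) (xs ys y' : list nat) : R :=
  match y' with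
  | nil => eta i t n m xl yl X v xs ys
  | _ :: _ =>
    match excluded_middle_informative
            (exists w, label_witness i t xl yl v xs ys w) with
    | left H =>
        dimB m (piece_y n m xl yl (X v)
                  (proj1_sig (constructive_indefinite_description _ H)) y')
    | right _ => 0
    end
  end.

Definition closed2 (A : R * R -> Prop) : Prop :=
  forall p, (forall eps, 0 < eps -> exists q, A q /\
               Rabs (fst q - fst p) < eps /\ Rabs (snd q - snd p) < eps) -> A p.

Definition in_unit_square (p : R * R) : Prop :=
  0 <= fst p <= 1 /\ 0 <= snd p <= 1.

(* Main.v *)
Require Import Defs.
From Stdlib Require Import Reals List Lra Lia ZArith ClassicalEpsilon Classical FunctionalExtensionality PropExtensionality Bool.
From Coquelicot Require Import Coquelicot.
Open Scope R_scope.

Fixpoint cnt (P : nat -> Prop) (N : nat) : nat :=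
  match N with
  | O => O
  | S N' => (cnt P N' + (if excluded_middle_informative (P N') then 1 else 0))%nat
  end.

Lemma cnt_le P N : (cnt P N <= N)%nat.
Proof. induction N; simpl; [lia|]. destruct excluded_middle_informative; lia. Qed.

Lemma cnt_mono (P Q : nat -> Prop) N :
  (forall j, (j < N)%nat -> P j -> Q j) -> (cnt P N <= cnt Q N)%nat.
Proof.
  induction N; intros H; simpl; [lia|].
  assert (IH := IHN (fun j Hj => H j ltac:(lia))).
  destruct (excluded_middle_informative (P N)) as [p|p];
  destruct (excluded_middle_informative (Q N)) as [q|q]; try lia.
  exfalso; apply q, H; auto.
Qed.

Lemma cnt_or P Q N : (cnt (fun j => P j \/ Q j) N <= cnt P N + cnt Q N)%nat.
Proof.
  induction N; simpl; [lia|].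
  destruct (excluded_middle_informative (P N \/ Q N)) as [h|h];
  destruct (excluded_middle_informative (P N)); destruct (excluded_middle_informative (Q N));
  try tauto; lia.
Qed.

Lemma cnt_add P N M : cnt P (N + M) = (cnt P N + cnt (fun r => P (N + r)%nat) M)%nat.
Proof.
  induction M; simpl.
  - rewrite Nat.add_0_r; lia.
  - rewrite Nat.add_succ_r; simpl. rewrite IHM. lia.
Qed.

Lemma cnt_mul_bound P Q a b K :
  (forall y, (y < a)%nat ->
     (cnt (fun r => P (y*b + r)%nat) b <= K * (if excluded_middle_informative (Q y) then 1 else 0))%nat) ->
  (cnt P (a*b) <= cnt Q a * K)%nat.
Proof.
  revert b; induction a as [|a IH]; intros b H; simpl; [lia|].
  rewrite (Nat.add_comm b (a*b)), cnt_add.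
  assert (H1 := H a (Nat.lt_succ_diag_r a)).
  assert (H2 : (cnt P (a*b) <= cnt Q a * K)%nat) by (apply IH; intros; apply H; lia).
  destruct (excluded_middle_informative (Q a)); nia.
Qed.

Lemma cnt_zero P N : (forall j, (j < N)%nat -> ~ P j) -> cnt P N = 0%nat.
Proof.
  induction N; intros H; simpl; auto.
  rewrite IHN by (intros; apply H; lia).
  destruct excluded_middle_informative as [p|p]; auto. exfalso; apply (H N); auto.
Qed.

Lemma cnt_monoN P N1 N2 : (N1 <= N2)%nat -> (cnt P N1 <= cnt P N2)%nat.
Proof.
  intros H. replace N2 with (N1 + (N2 - N1))%nat by lia. rewrite cnt_add. lia.
Qed.

Lemma cnt_shift_le P y b N : (y*b + b <= N)%nat ->
  (cnt (fun r => P (y*b + r)%nat) b <= cnt P N)%nat.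
Proof.
  intros H. eapply Nat.le_trans; [|apply (cnt_monoN P _ _ H)].
  rewrite cnt_add. lia.
Qed.

Lemma cnt_pos P N j : (j < N)%nat -> P j -> (1 <= cnt P N)%nat.
Proof.
  intros Hj Pj. eapply Nat.le_trans; [|apply (cnt_monoN P (S j) N Hj)].
  simpl. destruct excluded_middle_informative; [lia|tauto].
Qed.

Lemma cnt_singleZ (z : Z) N : (cnt (fun j => Z.of_nat j = z) N <= 1)%nat.
Proof.
  induction N; simpl; [lia|].
  destruct excluded_middle_informative as [e|e]; [|lia].
  rewrite cnt_zero; [lia|]. intros j Hj Hz. subst z. apply Nat2Z.inj in Hz. lia.
Qed.

Lemma cnt_near3 (z : Z) N :
  (cnt (fun j => (z - 1 <= Z.of_nat j <= z + 1)%Z) N <= 3)%nat.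
Proof.
  eapply Nat.le_trans.
  - apply (cnt_mono _ (fun j => Z.of_nat j = (z-1)%Z \/ (Z.of_nat j = z \/ Z.of_nat j = (z+1)%Z))).
    intros; lia.
  - eapply Nat.le_trans; [apply cnt_or|].
    assert (h1 := cnt_singleZ (z-1) N).
    assert (h2 := cnt_or (fun j => Z.of_nat j = z) (fun j => Z.of_nat j = (z+1)%Z) N).
    assert (h3 := cnt_singleZ z N). assert (h4 := cnt_singleZ (z+1) N). lia.
Qed.

Fixpoint sumL {A} (f : A -> nat) (l : list A) : nat :=
  match l with nil => O | a :: l' => (f a + sumL f l')%nat end.

Lemma cnt_list_union {A} (P : nat -> Prop) (Q : A -> nat -> Prop) (l : list A) N :
  (forall j, (j < N)%nat -> P j -> exists a, In a l /\ Q a j) ->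
  (cnt P N <= sumL (fun a => cnt (Q a) N) l)%nat.
Proof.
  revert P; induction l as [|a l IH]; intros P H; simpl.
  - rewrite cnt_zero; auto. intros j Hj Pj. destruct (H j Hj Pj) as [? [[] _]].
  - eapply Nat.le_trans.
    + apply (cnt_mono P (fun j => Q a j \/ (P j /\ ~ Q a j))). intros j Hj Pj. tauto.
    + eapply Nat.le_trans; [apply cnt_or|].
      assert (cnt (fun j => P j /\ ~ Q a j) N <= sumL (fun a0 => cnt (Q a0) N) l)%nat.
      { apply IH. intros j Hj [Pj nQ]. destruct (H j Hj Pj) as [b [[<-|Hb] Qb]]; [tauto|eauto]. }
      lia.
Qed.

Lemma sumL_le {A} (f : A -> nat) l K : (forall a, In a l -> (f a <= K)%nat) ->
  (sumL f l <= K * length l)%nat.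
Proof.
  induction l; simpl; intros H; [lia|].
  assert (f a <= K)%nat by auto. assert (sumL f l <= K * length l)%nat by auto. nia.
Qed.

Lemma min_exists (P : nat -> Prop) : (exists N, P N) -> exists N, P N /\ forall N', P N' -> (N <= N')%nat.
Proof.
  intros [N HN]. revert HN. induction N as [N IH] using (well_founded_induction lt_wf). intros HN.
  destruct (classic (exists N', P N' /\ (N' < N)%nat)) as [[N' [HN' Hlt]]|Hno].
  - exact (IH N' Hlt HN').
  - exists N; split; auto. intros N' HN'. destruct (Nat.le_gt_cases N N'); auto.
    exfalso; apply Hno; eauto.
Qed.

Lemma cell_exists (N : nat) (x : R) : (1 <= N)%nat -> 0 <= x <= INR N ->
  exists j, (j < N)%nat /\ INR j <= x <= INR j + 1.
Proof.
  induction N as [|N IH]; intros HN Hx; [lia|].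
  destruct (Nat.eq_dec N 0) as [->|HN0].
  - exists 0%nat; split; [lia|]. simpl in *; lra.
  - destruct (Rle_dec x (INR N)) as [Hle|Hgt].
    + destruct (IH ltac:(lia) ltac:(lra)) as [j [Hj Hj']]. exists j; split; auto; lia.
    + exists N; split; [lia|]. rewrite S_INR in Hx. lra.
Qed.

Section Counting.
Variable m : nat.
Hypothesis Hm : (0 < m)%nat.

Definition Mp (k : nat) : R := INR m ^ k.

Lemma Mp_pos k : 0 < Mp k.
Proof. unfold Mp; apply pow_lt, lt_0_INR; auto. Qed.

Lemma Mp_INR k : Mp k = INR (m ^ k).
Proof. unfold Mp; now rewrite pow_INR. Qed.

Lemma pow_pos_nat k : (1 <= m ^ k)%nat.
Proof. induction k; simpl; [lia|]. nia. Qed.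

Definition cellP (k : nat) (F : R -> Prop) (j : nat) : Prop :=
  exists s, F s /\ INR j / Mp k <= s <= (INR j + 1) / Mp k.

Definition Ck (k : nat) (F : R -> Prop) : nat := cnt (cellP k F) (m ^ k).

Definition sub01 (F : R -> Prop) := forall s, F s -> 0 <= s <= 1.

Lemma point_cell k s : 0 <= s <= 1 -> exists j, (j < m ^ k)%nat /\ INR j / Mp k <= s <= (INR j + 1) / Mp k.
Proof.
  intros Hs. assert (HM := Mp_pos k).
  destruct (cell_exists (m ^ k) (s * Mp k) (pow_pos_nat k)) as [j [Hj Hj']].
  { rewrite <- Mp_INR. split; [apply Rmult_le_pos; lra| nra]. }
  exists j; split; auto. split.
  - apply (Rmult_le_reg_r (Mp k)); auto. field_simplify; lra.
  - apply (Rmult_le_reg_r (Mp k)); auto. field_simplify; lra.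
Qed.

Lemma is_Nk_exists k F : sub01 F -> exists N, is_Nk m k F N.
Proof.
  intros HF.
  destruct (min_exists (fun N => exists J, length J = N /\ covers m k F J)) as [N [HN Hmin]].
  - exists (length (map Z.of_nat (seq 0 (m ^ k)))). eexists; split; [reflexivity|].
    intros s Fs. destruct (point_cell k s (HF s Fs)) as [j [Hj Hc]].
    exists (Z.of_nat j). split.
    + apply in_map, in_seq. lia.
    + rewrite <- INR_IZR_INZ. exact Hc.
  - exists N. split; auto. intros J HJ. apply Hmin. eauto.
Qed.

Lemma Nk_spec k F : sub01 F -> is_Nk m k F (Nk m k F).
Proof.
  intros HF. unfold Nk. apply epsilon_spec. apply is_Nk_exists; auto.
Qed.

Lemma Nk_le k F J : sub01 F -> covers m k F J -> (Nk m k F <= length J)%nat.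
Proof. intros HF HJ. destruct (Nk_spec k F HF) as [_ H]. auto. Qed.

Lemma Nk_cover k F : sub01 F -> exists J, length J = Nk m k F /\ covers m k F J.
Proof. intros HF. destruct (Nk_spec k F HF) as [H _]. auto. Qed.

Lemma Nk_empty k F : (forall s, ~ F s) -> Nk m k F = 0%nat.
Proof.
  intros HF. assert (H01 : sub01 F) by (intros s Fs; destruct (HF s Fs)).
  assert (H := Nk_le k F nil H01). simpl in H.
  assert (Nk m k F <= 0)%nat; [apply H|lia].
  intros s Fs; destruct (HF s Fs).
Qed.

Lemma cnt_list_exists (P : nat -> Prop) N :
  exists J, length J = cnt P N /\ forall j, (j < N)%nat -> P j -> In (Z.of_nat j) J.
Proof.
  induction N as [|N [J [HJ HJin]]].
  - exists nil; split; auto. intros; lia.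
  - simpl. destruct (excluded_middle_informative (P N)) as [p|p].
    + exists (J ++ Z.of_nat N :: nil). rewrite length_app; simpl; split; [lia|].
      intros j Hj Pj. apply in_or_app. destruct (Nat.eq_dec j N) as [->|ne]; [right; now left|].
      left; apply HJin; auto; lia.
    + exists J; split; [lia|]. intros j Hj Pj. destruct (Nat.eq_dec j N) as [->|ne]; [tauto|].
      apply HJin; auto; lia.
Qed.

Lemma Nk_le_Ck k F : sub01 F -> (Nk m k F <= Ck k F)%nat.
Proof.
  intros HF. destruct (cnt_list_exists (cellP k F) (m ^ k)) as [J [HJ HJin]].
  unfold Ck; rewrite <- HJ. apply Nk_le; auto.
  intros s Fs. destruct (point_cell k s (HF s Fs)) as [j [Hj Hc]].
  exists (Z.of_nat j). split.
  - apply HJin; auto. exists s; auto.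
  - rewrite <- INR_IZR_INZ; auto.
Qed.

Lemma Ck_le_cover k F J : covers m k F J -> (Ck k F <= 3 * length J)%nat.
Proof.
  intros HJ. unfold Ck.
  eapply Nat.le_trans.
  - apply (cnt_list_union (cellP k F) (fun z j => (z - 1 <= Z.of_nat j <= z + 1)%Z) J).
    intros j Hj [s [Fs Hs]]. destruct (HJ s Fs) as [z [Hz Hzs]]. exists z; split; auto.
    assert (HM := Mp_pos k). unfold Mp in *.
    assert (A1 : INR j <= IZR z + 1).
    { apply (Rmult_le_reg_r (/ INR m ^ k)); [apply Rinv_0_lt_compat; auto|]. unfold Rdiv in *; lra. }
    assert (A2 : IZR z <= INR j + 1).
    { apply (Rmult_le_reg_r (/ INR m ^ k)); [apply Rinv_0_lt_compat; auto|]. unfold Rdiv in *; lra. }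
    rewrite INR_IZR_INZ in A1, A2. rewrite <- plus_IZR in A1, A2.
    apply le_IZR in A1. apply le_IZR in A2. lia.
  - apply sumL_le. intros; apply cnt_near3.
Qed.

Lemma Ck_le_3Nk k F : sub01 F -> (Ck k F <= 3 * Nk m k F)%nat.
Proof.
  intros HF. destruct (Nk_cover k F HF) as [J [HJ HJc]]. rewrite <- HJ. apply Ck_le_cover; auto.
Qed.

Lemma Ck_le_pow k F : (Ck k F <= m ^ k)%nat.
Proof. apply cnt_le. Qed.

Lemma Ck_pos k F : sub01 F -> (exists s, F s) -> (1 <= Ck k F)%nat.
Proof.
  intros HF [s Fs]. destruct (point_cell k s (HF s Fs)) as [j [Hj Hc]].
  apply (cnt_pos _ _ j); auto. exists s; auto.
Qed.


Lemma div_le_mul a M s : 0 < M -> (a / M <= s <-> a <= s * M).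
Proof.
  intros HM. split; intros H.
  - replace a with (a / M * M) by (field; lra). apply Rmult_le_compat_r; lra.
  - replace s with (s * M / M) by (field; lra). unfold Rdiv. apply Rmult_le_compat_r; [|lra].
    left; apply Rinv_0_lt_compat; auto.
Qed.

Lemma le_div_mul a M s : 0 < M -> (s <= a / M <-> s * M <= a).
Proof.
  intros HM. split; intros H.
  - replace a with (a / M * M) by (field; lra). apply Rmult_le_compat_r; lra.
  - replace s with (s * M / M) by (field; lra). unfold Rdiv. apply Rmult_le_compat_r; [|lra].
    left; apply Rinv_0_lt_compat; auto.
Qed.

Lemma cell_mul k F j : cellP k F j <-> exists s, F s /\ INR j <= s * Mp k <= INR j + 1.
Proof.
  assert (HM := Mp_pos k). unfold cellP. split; intros [s [Fs [H1 H2]]]; exists s; split; auto.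
  - rewrite div_le_mul in H1; auto. rewrite le_div_mul in H2; auto.
  - rewrite div_le_mul; auto. rewrite le_div_mul; auto.
Qed.

Lemma Mp_add a b : Mp (a + b) = Mp a * Mp b.
Proof. unfold Mp; apply pow_add. Qed.

Lemma Ck_mono k (F G : R -> Prop) : (forall s, F s -> G s) -> (Ck k F <= Ck k G)%nat.
Proof.
  intros H. apply cnt_mono. intros j _ [s [Fs Hs]]. exists s; auto.
Qed.

Lemma Ck_level k j F : (Ck (k + j) F <= Ck k F * m ^ j)%nat.
Proof.
  unfold Ck. rewrite Nat.pow_add_r. apply cnt_mul_bound. intros y Hy.
  destruct (excluded_middle_informative (cellP k F y)) as [c|c].
  - rewrite Nat.mul_1_r. apply cnt_le.
  - rewrite cnt_zero; [lia|]. intros r Hr Hc. apply c.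
    rewrite cell_mul in Hc |- *. destruct Hc as [s [Fs Hs]]. exists s; split; auto.
    rewrite Mp_add in Hs. assert (HMj := Mp_pos j). assert (HMk := Mp_pos k).
    rewrite plus_INR, mult_INR, <- Mp_INR in Hs.
    assert (Hr' : INR r + 1 <= Mp j) by (rewrite Mp_INR, <- S_INR; apply le_INR; lia).
    assert (INR r >= 0) by (apply Rle_ge, pos_INR).
    split.
    + apply (Rmult_le_reg_r (Mp j)); auto. nra.
    + apply (Rmult_le_reg_r (Mp j)); auto. nra.
Qed.

Definition PhiI (L Y : nat) (s : R) : R := (s + INR Y) / Mp L.

Definition img (L Y : nat) (F : R -> Prop) : R -> Prop :=
  fun s => exists s', F s' /\ s = PhiI L Y s'.

Definition zoom (F : R -> Prop) (L Y : nat) : R -> Prop :=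
  fun s => 0 < s < 1 /\ F (PhiI L Y s).

Lemma PhiI_mul L k Y s : PhiI L Y s * Mp (L + k) = s * Mp k + INR Y * Mp k.
Proof. unfold PhiI. rewrite Mp_add. assert (H := Mp_pos L). field. lra. Qed.

Lemma img_sub01 L Y F : sub01 F -> (Y < m ^ L)%nat -> sub01 (img L Y F).
Proof.
  intros HF HY s [s' [Fs' ->]]. destruct (HF s' Fs'). unfold PhiI.
  assert (HM := Mp_pos L). assert (INR Y + 1 <= Mp L) by (rewrite Mp_INR, <- S_INR; apply le_INR; lia).
  assert (0 <= INR Y) by apply pos_INR.
  split; [apply Rmult_le_pos; [lra|left; apply Rinv_0_lt_compat; auto]|].
  rewrite div_le_mul by auto. lra.
Qed.

Lemma Nk_img k L Y F : sub01 F -> (Y < m ^ L)%nat -> Nk m (k + L) (img L Y F) = Nk m k F.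
Proof.
  intros HF HY. assert (HI := img_sub01 L Y F HF HY).
  assert (HMk := Mp_pos k). assert (HML := Mp_pos L).
  set (sh := Z.of_nat (Y * m ^ k)).
  assert (Esh : IZR sh = INR Y * Mp k) by (unfold sh; rewrite <- INR_IZR_INZ, mult_INR, Mp_INR; auto).
  apply Nat.le_antisymm.
  - destruct (Nk_cover k F HF) as [J [HJ HJc]]. rewrite <- HJ.
    rewrite <- (length_map (fun z => (z + sh)%Z) J). apply Nk_le; auto.
    intros s [s' [Fs' ->]]. destruct (HJc s' Fs') as [z [Hz Hzs]].
    exists (z + sh)%Z. split; [apply (in_map (fun z => (z + sh)%Z)); auto|].
    fold (Mp (k + L)). fold (Mp k) in Hzs.
    rewrite div_le_mul in Hzs by auto. rewrite le_div_mul in Hzs by auto.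
    rewrite div_le_mul by apply Mp_pos. rewrite le_div_mul by apply Mp_pos.
    rewrite plus_IZR, Esh. rewrite Nat.add_comm, PhiI_mul. lra.
  - destruct (Nk_cover (k + L) (img L Y F) HI) as [J [HJ HJc]]. rewrite <- HJ.
    rewrite <- (length_map (fun z => (z - sh)%Z) J). apply Nk_le; auto.
    intros s' Fs'. destruct (HJc (PhiI L Y s') (ex_intro _ s' (conj Fs' eq_refl))) as [z [Hz Hzs]].
    exists (z - sh)%Z. split; [apply (in_map (fun z => (z - sh)%Z)); auto|].
    fold (Mp (k + L)) in Hzs. fold (Mp k).
    rewrite div_le_mul in Hzs by apply Mp_pos. rewrite le_div_mul in Hzs by apply Mp_pos.
    rewrite div_le_mul by auto. rewrite le_div_mul by auto.
    rewrite minus_IZR, Esh. rewrite Nat.add_comm, PhiI_mul in Hzs. lra.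
Qed.

Lemma split_lower L k F Y : (Y < m ^ L)%nat -> (Ck k (zoom F L Y) <= Ck (L + k) F)%nat.
Proof.
  intros HY. unfold Ck. rewrite Nat.pow_add_r.
  eapply Nat.le_trans; [|apply (cnt_shift_le _ Y (m ^ k)); nia].
  apply cnt_mono. intros r Hr Hc. rewrite cell_mul in Hc |- *.
  destruct Hc as [s [[Hs01 Fs] Hs]]. exists (PhiI L Y s). split; auto.
  rewrite PhiI_mul, plus_INR, mult_INR, <- Mp_INR. lra.
Qed.

Lemma split_upper L k F K : sub01 F ->
  (forall Y, (Y < m ^ L)%nat -> (Ck k (zoom F L Y) <= K)%nat) ->
  (Ck (L + k) F <= Ck L F * (K + 2))%nat.
Proof.
  intros HF HK. unfold Ck at 1. rewrite Nat.pow_add_r. apply cnt_mul_bound. intros y Hy.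
  destruct (excluded_middle_informative (cellP L F y)) as [c|c].
  - rewrite Nat.mul_1_r.
    eapply Nat.le_trans.
    + apply (cnt_mono _ (fun r => cellP k (zoom F L y) r \/
                 (Z.of_nat r = 0%Z \/ Z.of_nat r = Z.of_nat (m ^ k - 1)))).
      intros r Hr Hc. rewrite cell_mul in Hc. destruct Hc as [s [Fs Hs]].
      rewrite plus_INR, mult_INR, <- Mp_INR in Hs.
      assert (HML := Mp_pos L). assert (HMk := Mp_pos k).
      assert (E : s * Mp (L + k) = (s * Mp L) * Mp k) by (rewrite Mp_add; ring).
      rewrite E in Hs.
      assert (Hr1 : INR r + 1 <= Mp k) by (rewrite Mp_INR, <- S_INR; apply le_INR; lia).
      assert (INR r >= 0) by (apply Rle_ge, pos_INR).
      assert (Hlo : INR y <= s * Mp L).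
      { apply (Rmult_le_reg_r (Mp k)); auto. nra. }
      assert (Hhi : s * Mp L <= INR y + 1).
      { apply (Rmult_le_reg_r (Mp k)); auto. nra. }
      destruct (Req_dec (s * Mp L) (INR y)) as [e|e].
      * right; left. rewrite e in Hs. assert (INR r <= 0) by nra.
        assert (Hr0 : INR r <= INR 0) by (simpl; lra). apply INR_le in Hr0. assert (r = 0%nat) by lia. subst; auto.
      * destruct (Req_dec (s * Mp L) (INR y + 1)) as [e'|e'].
        -- right; right. rewrite e' in Hs. assert (Mp k - 1 <= INR r) by nra.
           f_equal. assert (INR (m ^ k - 1) <= INR r).
           { rewrite minus_INR by apply pow_pos_nat. rewrite <- Mp_INR. simpl; lra. }
           apply INR_le in H1. lia.
        -- left. rewrite cell_mul. exists (s * Mp L - INR y). split.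
           ++ split.
              ** assert (0 < s * Mp L - INR y < 1) by lra. auto.
              ** unfold PhiI. replace ((s * Mp L - INR y + INR y) / Mp L) with s by (field; lra). auto.
           ++ assert (E2 : (s * Mp L - INR y) * Mp k = s * Mp L * Mp k - INR y * Mp k) by ring.
              rewrite E2. lra.
    + eapply Nat.le_trans; [apply cnt_or|].
      eapply Nat.le_trans; [apply Nat.add_le_mono; [apply HK; auto| apply cnt_or]|].
      assert (h1 := cnt_singleZ 0 (m ^ k)). assert (h2 := cnt_singleZ (Z.of_nat (m ^ k - 1)) (m ^ k)).
      lia.
  - rewrite cnt_zero; [lia|]. intros r Hr Hc. apply c.
    rewrite cell_mul in Hc |- *. destruct Hc as [s [Fs Hs]]. exists s; split; auto.
    rewrite plus_INR, mult_INR, <- Mp_INR in Hs.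
    assert (HML := Mp_pos L). assert (HMk := Mp_pos k).
    assert (E : s * Mp (L + k) = (s * Mp L) * Mp k) by (rewrite Mp_add; ring).
    rewrite E in Hs.
    assert (Hr1 : INR r + 1 <= Mp k) by (rewrite Mp_INR, <- S_INR; apply le_INR; lia).
    assert (INR r >= 0) by (apply Rle_ge, pos_INR).
    split.
    + apply (Rmult_le_reg_r (Mp k)); auto. nra.
    + apply (Rmult_le_reg_r (Mp k)); auto. nra.
Qed.


Lemma set_ext (F G : R -> Prop) : (forall s, F s <-> G s) -> F = G.
Proof. intros H. apply functional_extensionality. intros s. apply propositional_extensionality. auto. Qed.

Lemma PhiI_in01 L Y s : (Y < m ^ L)%nat -> 0 < s < 1 -> 0 < PhiI L Y s < 1.
Proof.
  intros HY Hs. unfold PhiI. assert (HM := Mp_pos L).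
  assert (INR Y + 1 <= Mp L) by (rewrite Mp_INR, <- S_INR; apply le_INR; lia).
  assert (0 <= INR Y) by apply pos_INR.
  split.
  - apply Rdiv_lt_0_compat; lra.
  - apply (Rmult_lt_reg_r (Mp L)); auto. replace ((s + INR Y) / Mp L * Mp L) with (s + INR Y) by (field; lra). lra.
Qed.

Lemma PhiI_comp L1 Y1 L2 Y2 s :
  PhiI L1 Y1 (PhiI L2 Y2 s) = PhiI (L1 + L2) (Y1 * m ^ L2 + Y2) s.
Proof.
  unfold PhiI. rewrite Mp_add, plus_INR, mult_INR, <- Mp_INR.
  assert (H1 := Mp_pos L1). assert (H2 := Mp_pos L2). field. lra.
Qed.

Lemma zoom_comp F L1 Y1 L2 Y2 : (Y2 < m ^ L2)%nat ->
  zoom (zoom F L1 Y1) L2 Y2 = zoom F (L1 + L2) (Y1 * m ^ L2 + Y2).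
Proof.
  intros HY. apply set_ext. intros s. unfold zoom. rewrite PhiI_comp. split.
  - intros [h [_ h']]; auto.
  - intros [h h']. split; auto. split; auto. apply PhiI_in01; auto.
Qed.

Lemma zoom_0 F : (forall s, F s -> 0 < s < 1) -> zoom F 0 0 = F.
Proof.
  intros HF. apply set_ext. intros s. unfold zoom, PhiI. simpl. unfold Mp; simpl.
  replace ((s + 0) / 1) with s by field. split; [tauto|]. intros h; split; auto.
Qed.

Lemma Ck_eq k F G : F = G -> Ck k F = Ck k G.
Proof. intros ->; auto. Qed.

End Counting.

Lemma INR_unb (x : R) : exists N : nat, x < INR N.
Proof.
  destruct (archimed x) as [H1 _]. exists (Z.abs_nat (up x)).
  rewrite INR_IZR_INZ, Zabs2Nat.id_abs.
  assert (IZR (up x) <= IZR (Z.abs (up x))) by (apply IZR_le; lia). lra.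
Qed.

Fixpoint sumR (u : nat -> R) (q : nat) : R :=
  match q with O => 0 | S q' => sumR u q' + u q' end.

Lemma sumR_ge (u : nat -> R) q r : (forall k, 0 <= u k) -> (r < q)%nat -> u r <= sumR u q.
Proof.
  intros Hu; induction q; intros Hr; [lia|]. simpl.
  destruct (Nat.eq_dec r q) as [->|ne].
  - assert (0 <= sumR u q) by (clear - Hu; induction q; simpl; [lra|]; generalize (Hu q); lra). lra.
  - assert (u r <= sumR u q) by (apply IHq; lia). generalize (Hu q); lra.
Qed.

Lemma subadd_iter (u : nat -> R) q r a : (forall x y, u (x + y)%nat <= u x + u y) ->
  u (a * q + r)%nat <= INR a * u q + u r.
Proof.
  intros Hs. induction a.
  - simpl; lra.
  - replace (S a * q + r)%nat with (q + (a * q + r))%nat by lia.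
    rewrite S_INR. specialize (Hs q (a * q + r)%nat). lra.
Qed.

Lemma fekete (u : nat -> R) : (forall x y, u (x + y)%nat <= u x + u y) -> (forall k, 0 <= u k) ->
  exists lam, 0 <= lam /\ is_lim_seq (fun k => u k / INR k) lam.
Proof.
  intros Hs Hu.
  set (E := fun x => exists k, (1 <= k)%nat /\ x = - (u k / INR k)).
  assert (HB : bound E).
  { exists 0. intros x [k [Hk ->]]. assert (0 < INR k) by (apply lt_0_INR; lia).
    assert (0 <= u k / INR k) by (apply Rmult_le_pos; [auto| left; apply Rinv_0_lt_compat; auto]). lra. }
  assert (HE : exists x, E x) by (exists (- (u 1%nat / INR 1)); exists 1%nat; split; auto).
  destruct (completeness E HB HE) as [l [Hub Hlub]].
  assert (P1 : forall k, (1 <= k)%nat -> - l <= u k / INR k).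
  { intros k Hk. assert (- (u k / INR k) <= l) by (apply Hub; exists k; auto). lra. }
  assert (Hl : l <= 0).
  { apply Hlub. intros x [k [Hk ->]]. assert (0 < INR k) by (apply lt_0_INR; lia).
    assert (0 <= u k / INR k) by (apply Rmult_le_pos; [auto| left; apply Rinv_0_lt_compat; auto]). lra. }
  assert (P2 : forall e, 0 < e -> exists q, (1 <= q)%nat /\ u q / INR q < - l + e).
  { intros e He. apply NNPP. intros Hno.
    assert (l <= l - e); [|lra]. apply Hlub. intros x [k [Hk ->]].
    assert (~ (u k / INR k < - l + e)) by (intros h; apply Hno; eauto). lra. }
  exists (- l). split; [lra|].
  apply is_lim_seq_spec. intros eps.
  destruct (P2 (eps / 2)) as [q [Hq Huq]]; [destruct eps; simpl; lra|].
  set (SS := sumR u q).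
  assert (HS : 0 <= SS) by (apply (Rle_trans _ (u 0%nat)); [auto| apply sumR_ge; auto; lia]).
  destruct (INR_unb (SS / (eps / 2))) as [N HN].
  exists (S (N + 1)). intros k Hk.
  assert (Hk0 : 0 < INR k) by (apply lt_0_INR; lia).
  assert (HqR : 0 < INR q) by (apply lt_0_INR; lia).
  rewrite Rabs_lt_between'. split.
  - assert (- l <= u k / INR k) by (apply P1; lia). destruct eps; simpl in *; lra.
  - set (a := (k / q)%nat). set (r := (k mod q)%nat).
    assert (Ek : k = (a * q + r)%nat) by (unfold a, r; rewrite Nat.mul_comm; apply Nat.div_mod; lia).
    assert (Hr : (r < q)%nat) by (apply Nat.mod_upper_bound; lia).
    assert (H1 := subadd_iter u q r a Hs). rewrite <- Ek in H1.
    assert (H2 : u r <= SS) by (apply sumR_ge; auto).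
    assert (Haq : INR a * INR q <= INR k) by (rewrite <- mult_INR; apply le_INR; lia).
    assert (H3 : INR a * u q <= INR k * (u q / INR q)).
    { replace (INR a * u q) with ((INR a * INR q) * (u q / INR q)) by (field; lra).
      apply Rmult_le_compat_r; auto. apply Rmult_le_pos; [auto|left; apply Rinv_0_lt_compat; auto]. }
    assert (HNk : INR N < INR k) by (apply lt_INR; lia).
    assert (H4 : SS < INR k * (eps / 2)).
    { destruct eps as [e He]; simpl in *.
      assert (SS < INR N * (e / 2)).
      { apply (Rmult_lt_reg_r (/ (e / 2))); [apply Rinv_0_lt_compat; lra|].
        replace (INR N * (e / 2) * / (e / 2)) with (INR N) by (field; lra). unfold Rdiv in HN; lra. }
      nra. }
    apply (Rmult_lt_reg_r (INR k)); auto.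
    replace (u k / INR k * INR k) with (u k) by (field; lra).
    destruct eps as [e He]; simpl in *. nra.
Qed.

Lemma exp_mono x y : x <= y -> exp x <= exp y.
Proof. intros [h|h]; [left; apply exp_increasing; auto| subst; lra]. Qed.

Lemma lim_close (x y : nat -> R) (l D : R) :
  is_lim_seq x l -> (forall k, (1 <= k)%nat -> Rabs (y k - x k) <= D / INR k) -> is_lim_seq y l.
Proof.
  intros Hx Hxy. apply is_lim_seq_spec. apply is_lim_seq_spec in Hx.
  intros eps. assert (He : 0 < eps / 2) by (destruct eps; simpl; lra).
  destruct (Hx (mkposreal _ He)) as [N1 HN1]. simpl in HN1.
  destruct (INR_unb (Rabs D / (eps / 2))) as [N2 HN2].
  exists (S (N1 + N2)). intros k Hk.
  assert (Hk0 : 0 < INR k) by (apply lt_0_INR; lia).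
  assert (HN2k : INR N2 < INR k) by (apply lt_INR; lia).
  specialize (HN1 k ltac:(lia)). specialize (Hxy k ltac:(lia)).
  assert (HD : D / INR k < eps / 2).
  { assert (D <= Rabs D) by apply Rle_abs.
    assert (Rabs D < INR N2 * (eps / 2)).
    { apply (Rmult_lt_reg_r (/ (eps / 2))); [apply Rinv_0_lt_compat; lra|].
      replace (INR N2 * (eps / 2) * / (eps / 2)) with (INR N2) by (field; lra). unfold Rdiv in HN2; lra. }
    apply (Rmult_lt_reg_r (INR k)); auto. replace (D / INR k * INR k) with D by (field; lra).
    assert (INR N2 * (eps / 2) <= INR k * (eps / 2)) by (apply Rmult_le_compat_r; lra). lra. }
  replace (y k - l) with ((y k - x k) + (x k - l)) by ring.
  eapply Rle_lt_trans; [apply Rabs_triang|]. destruct eps; simpl in *; lra.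
Qed.

Lemma bounds_from_lim (m : nat) (Nseq : nat -> nat) (Hm : (2 <= m)%nat)
  (H1 : forall k, (1 <= Nseq k)%nat) (H2 : forall k, (Nseq k <= m ^ k)%nat) d (Hd : 0 <= d)
  (Hlim : is_lim_seq (fun k => ln (INR (Nseq k)) / (INR k * ln (INR m))) d) :
  forall eps, 0 < eps -> exists c, 0 < c /\ forall k,
    / c * Rpower (INR m) (INR k * (d - eps)) <= INR (Nseq k) /\
    INR (Nseq k) <= c * Rpower (INR m) (INR k * (d + eps)).
Proof.
  intros eps Heps. apply is_lim_seq_spec in Hlim.
  destruct (Hlim (mkposreal _ Heps)) as [K HK]. simpl in HK.
  assert (Hm1 : 1 < INR m) by (apply (lt_INR 1); lia).
  assert (Hlm : 0 < ln (INR m)) by (rewrite <- ln_1; apply ln_increasing; lra).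
  set (c := INR (m ^ K) * Rpower (INR m) (INR K * d)).
  assert (HmK : 1 <= INR (m ^ K)) by (apply (le_INR 1); clear -Hm; induction K; simpl; nia).
  assert (HR : 1 <= Rpower (INR m) (INR K * d)).
  { unfold Rpower. rewrite <- exp_0. apply exp_mono. apply Rmult_le_pos; [|lra].
    apply Rmult_le_pos; [apply pos_INR|lra]. }
  assert (Hc1 : 1 <= c) by (unfold c; nra).
  exists c. split; [lra|]. intros k.
  assert (HN1 : 1 <= INR (Nseq k)) by (apply (le_INR 1); auto).
  assert (Hpos : 0 < INR (Nseq k)) by lra.
  destruct (le_lt_dec K k) as [HKk|HKk]; [destruct (Nat.eq_dec k 0) as [Hk0|Hk0]|].
  - subst k. simpl. rewrite !Rmult_0_l, Rpower_O by lra.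
    assert (Nseq 0 = 1)%nat by (specialize (H1 0%nat); specialize (H2 0%nat); simpl in H2; lia).
    rewrite H. simpl. split; [|lra]. assert (/ c <= 1) by (rewrite <- Rinv_1; apply Rinv_le_contravar; lra). lra.
  - specialize (HK k HKk). apply Rabs_lt_between' in HK.
    assert (Hk : 0 < INR k) by (apply lt_0_INR; lia).
    assert (Hkl : 0 < INR k * ln (INR m)) by (apply Rmult_lt_0_compat; auto).
    set (v := ln (INR (Nseq k)) / (INR k * ln (INR m))) in HK.
    assert (Ev : ln (INR (Nseq k)) = v * (INR k * ln (INR m))) by (unfold v; field; lra).
    rewrite <- (exp_ln _ Hpos), Ev. unfold Rpower. split.
    + assert (/ c <= 1) by (rewrite <- Rinv_1; apply Rinv_le_contravar; lra).
      assert (exp (INR k * (d - eps) * ln (INR m)) <= exp (v * (INR k * ln (INR m)))).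
      { apply exp_mono. replace (INR k * (d - eps) * ln (INR m)) with ((d - eps) * (INR k * ln (INR m))) by ring.
        apply Rmult_le_compat_r; lra. }
      assert (0 < exp (INR k * (d - eps) * ln (INR m))) by apply exp_pos. nra.
    + assert (exp (v * (INR k * ln (INR m))) <= exp (INR k * (d + eps) * ln (INR m))).
      { apply exp_mono. replace (INR k * (d + eps) * ln (INR m)) with ((d + eps) * (INR k * ln (INR m))) by ring.
        apply Rmult_le_compat_r; lra. }
      assert (0 < exp (INR k * (d + eps) * ln (INR m))) by apply exp_pos. nra.
  - assert (HNK : INR (Nseq k) <= INR (m ^ K)).
    { apply le_INR. eapply Nat.le_trans; [apply H2|]. apply Nat.pow_le_mono_r; lia. }
    unfold Rpower. split.
    + assert (exp (INR k * (d - eps) * ln (INR m)) <= Rpower (INR m) (INR K * d)).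
      { unfold Rpower. apply exp_mono. apply Rmult_le_compat_r; [lra|].
        assert (INR k <= INR K) by (apply le_INR; lia). assert (0 <= INR k) by apply pos_INR. nra. }
      assert (Hc : 0 < c) by lra.
      assert (Rpower (INR m) (INR K * d) <= c) by (unfold c; nra).
      assert (/ c * exp (INR k * (d - eps) * ln (INR m)) <= / c * c).
      { apply Rmult_le_compat_l; [left; apply Rinv_0_lt_compat; lra| lra]. }
      rewrite Rinv_l in H3 by lra. lra.
    + assert (1 <= exp (INR k * (d + eps) * ln (INR m))).
      { rewrite <- exp_0. apply exp_mono. apply Rmult_le_pos; [|lra]. apply Rmult_le_pos; [apply pos_INR|lra]. }
      assert (INR (m ^ K) <= c) by (unfold c; nra). nra.
Qed.

Fixpoint maxN (N : nat) (f : nat -> nat) : nat :=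
  match N with O => O | S N' => Nat.max (maxN N' f) (f N') end.

Lemma maxN_ge N f i : (i < N)%nat -> (f i <= maxN N f)%nat.
Proof.
  induction N; simpl; intros; [lia|]. destruct (Nat.eq_dec i N); subst; [lia|].
  specialize (IHN ltac:(lia)); lia.
Qed.

Lemma maxN_le N f K : (forall i, (i < N)%nat -> (f i <= K)%nat) -> (maxN N f <= K)%nat.
Proof.
  induction N; simpl; intros H; [lia|].
  specialize (IHN (fun i Hi => H i ltac:(lia))). specialize (H N ltac:(lia)). lia.
Qed.

Lemma dimB_m1 F : dimB 1 F = 0.
Proof.
  unfold dimB. rewrite (Lim_seq_ext _ (fun _ => 0)).
  - rewrite Lim_seq_const. auto.
  - intros k. simpl (INR 1). rewrite ln_1, Rmult_0_r. unfold Rdiv. rewrite Rinv_0. ring.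
Qed.

Section Core.
Variable m : nat.
Hypothesis Hm : (0 < m)%nat.
Variable G : Type.
Variable T : G -> R -> Prop.
Hypothesis HT01 : forall g s, T g s -> 0 < s < 1.
Hypothesis Hzoom : forall g L Y, (Y < m ^ L)%nat -> exists g', zoom m (T g) L Y = T g'.
Variable lG : list G.
Hypothesis Hfin : forall g, exists g', In g' lG /\ T g = T g'.

Lemma T_sub01 g : sub01 (T g).
Proof. intros s h; destruct (HT01 g s h); lra. Qed.

Lemma zoom_sub01 F L Y : sub01 (zoom m F L Y).
Proof. intros s [h _]; lra. Qed.

Lemma reach_list g0 (l : list G) : exists J, forall g', In g' l ->
  (exists L Y, (Y < m ^ L)%nat /\ zoom m (T g0) L Y = T g') ->
  exists L Y, (L <= J)%nat /\ (Y < m ^ L)%nat /\ zoom m (T g0) L Y = T g'.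
Proof.
  induction l as [|a l [J HJ]].
  - exists 0%nat. intros g' [].
  - destruct (classic (exists L Y, (Y < m ^ L)%nat /\ zoom m (T g0) L Y = T a)) as [[L1 [Y1 [HY1 E1]]]|Hn].
    + exists (Nat.max J L1). intros g' [<-|Hin] Hr.
      * exists L1, Y1. repeat split; auto; lia.
      * destruct (HJ g' Hin Hr) as [L [Y [? [? ?]]]]. exists L, Y; repeat split; auto; lia.
    + exists J. intros g' [<-|Hin] Hr; [tauto|]. apply HJ; auto.
Qed.

Lemma reach g0 : exists J, forall L Y, (Y < m ^ L)%nat ->
  exists L' Y', (L' <= J)%nat /\ (Y' < m ^ L')%nat /\ zoom m (T g0) L Y = zoom m (T g0) L' Y'.
Proof.
  destruct (reach_list g0 lG) as [J HJ]. exists J. intros L Y HY.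
  destruct (Hzoom g0 L Y HY) as [g1 E1]. destruct (Hfin g1) as [g' [Hin E2]].
  destruct (HJ g' Hin) as [L' [Y' [? [? E3]]]].
  { exists L, Y; split; auto; congruence. }
  exists L', Y'. repeat split; auto. congruence.
Qed.

Lemma lim_T g0 : (2 <= m)%nat -> (exists s, T g0 s) ->
  exists d, 0 <= d /\ is_lim_seq (fun k => ln (INR (Nk m k (T g0))) / (INR k * ln (INR m))) d.
Proof.
  intros Hm2 Hne. destruct (reach g0) as [J HJ].
  set (F := T g0).
  assert (HF : sub01 F) by apply T_sub01.
  set (B := fun k => maxN (S J) (fun L => maxN (m ^ L) (fun Y => Ck m k (zoom m F L Y)))).
  assert (Ha1 : forall k, (1 <= Ck m k F)%nat) by (intros; apply Ck_pos; auto).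
  assert (HBi : forall k, (Ck m k F <= B k)%nat).
  { intros k. unfold B. eapply Nat.le_trans; [|apply (maxN_ge _ _ 0); lia].
    eapply Nat.le_trans; [|apply (maxN_ge _ _ 0); simpl; lia].
    cbv beta. rewrite zoom_0; auto. apply HT01. }
  assert (HBii : forall k, (B k <= Ck m k F * m ^ J)%nat).
  { intros k. apply maxN_le. intros L HL. apply maxN_le. intros Y HY.
    eapply Nat.le_trans; [apply split_lower; auto|].
    rewrite Nat.add_comm. eapply Nat.le_trans; [apply Ck_level; auto|].
    apply Nat.mul_le_mono_l. apply Nat.pow_le_mono_r; lia. }
  assert (HBiii : forall L k, (B (L + k) <= B L * (B k + 2))%nat).
  { intros L k. apply maxN_le. intros L1 HL1. apply maxN_le. intros Y1 HY1.
    eapply Nat.le_trans.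
    - apply (split_upper m Hm L k (zoom m F L1 Y1) (B k)); [apply zoom_sub01|].
      intros Y HY. rewrite zoom_comp by auto.
      assert (HY' : (Y1 * m ^ L + Y < m ^ (L1 + L))%nat).
      { rewrite Nat.pow_add_r. nia. }
      destruct (HJ _ _ HY') as [L' [Y' [HL' [HY'' E]]]]. unfold F in *. rewrite E.
      unfold B. eapply Nat.le_trans; [|apply (maxN_ge _ _ L'); lia].
      apply (maxN_ge (m ^ L') (fun Y => Ck m k (zoom m (T g0) L' Y))); auto.
    - apply Nat.mul_le_mono_r. unfold B.
      eapply Nat.le_trans; [|apply (maxN_ge _ _ L1); lia].
      apply (maxN_ge (m ^ L1) (fun Y => Ck m L (zoom m F L1 Y))); auto. }
  assert (HB1 : forall k, (1 <= B k)%nat) by (intros k; specialize (Ha1 k); specialize (HBi k); lia).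
  set (u := fun k => ln (3 * INR (B k))).
  assert (Hu0 : forall k, 0 <= u k).
  { intros k. unfold u. rewrite <- ln_1. apply ln_le; [lra|].
    assert (1 <= INR (B k)) by (apply (le_INR 1); auto). lra. }
  assert (Hsub : forall x y, u (x + y)%nat <= u x + u y).
  { intros x y. unfold u. assert (Bx := HB1 x). assert (By := HB1 y).
    assert (H3 : (B (x + y) <= 3 * B x * B y)%nat) by (specialize (HBiii x y); nia).
    apply le_INR in H3. rewrite !mult_INR in H3.
    replace (INR 3) with 3 in H3 by (simpl; ring).
    assert (1 <= INR (B x)) by (apply (le_INR 1); auto).
    assert (1 <= INR (B y)) by (apply (le_INR 1); auto).
    rewrite <- (ln_mult (3 * INR (B x)) (3 * INR (B y))) by lra. apply ln_le.
    - assert (1 <= INR (B (x + y)%nat)) by (apply (le_INR 1); auto). lra.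
    - nra. }
  destruct (fekete u Hsub Hu0) as [lam [Hlam Hlim]].
  assert (Hm1 : 1 < INR m) by (apply (lt_INR 1); lia).
  assert (Hlm : 0 < ln (INR m)) by (rewrite <- ln_1; apply ln_increasing; lra).
  assert (Hl3 : 0 < ln 3) by (rewrite <- ln_1; apply ln_increasing; lra).
  set (w := fun k => ln (INR (Nk m k F))).
  set (D := 2 * ln 3 + INR J * ln (INR m)).
  assert (Hwu : forall k, Rabs (w k - u k) <= D).
  { intros k. unfold w, u.
    assert (N1 := Nk_le_Ck m Hm k F HF). assert (N2 := Ck_le_3Nk m Hm k F HF).
    assert (A1 := Ha1 k). assert (B1 := HBi k). assert (B2 := HBii k).
    assert (HN1 : (1 <= Nk m k F)%nat) by lia.
    assert (R1 : 1 <= INR (Nk m k F)) by (apply (le_INR 1); auto).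
    assert (R2 : INR (Nk m k F) <= INR (B k)) by (apply le_INR; lia).
    assert (R3 : INR (B k) <= 3 * INR (Nk m k F) * INR m ^ J).
    { rewrite <- pow_INR. replace 3 with (INR 3) by (simpl; ring). rewrite <- !mult_INR. apply le_INR. nia. }
    assert (HmJ : 0 < INR m ^ J) by (apply pow_lt; lra).
    rewrite ln_mult by (try lra; apply (lt_INR 0); lia).
    assert (ln (INR (Nk m k F)) <= ln (INR (B k))) by (apply ln_le; lra).
    assert (ln (INR (B k)) <= ln 3 + ln (INR (Nk m k F)) + INR J * ln (INR m)).
    { rewrite <- ln_pow by lra. rewrite <- !ln_mult by (try apply pow_lt; lra).
      apply ln_le; [apply (lt_INR 0); lia| auto]. }
    apply Rabs_le. unfold D. split; lra. }
  assert (Hlim2 : is_lim_seq (fun k => w k / INR k) lam).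
  { apply (lim_close (fun k => u k / INR k) _ lam D Hlim). intros k Hk.
    assert (Hk0 : 0 < INR k) by (apply lt_0_INR; lia).
    replace (w k / INR k - u k / INR k) with ((w k - u k) * / INR k) by (field; lra).
    rewrite Rabs_mult, Rabs_inv, (Rabs_pos_eq (INR k)) by lra.
    apply Rmult_le_compat_r; [left; apply Rinv_0_lt_compat; lra| auto]. }
  exists (lam / ln (INR m)). split; [apply Rmult_le_pos; [lra| left; apply Rinv_0_lt_compat; lra]|].
  assert (H := is_lim_seq_scal_r _ (/ ln (INR m)) lam Hlim2). simpl in H.
  eapply is_lim_seq_ext; [|apply H]. intros k. unfold w, F. unfold Rdiv. rewrite Rinv_mult. ring.
Qed.


Definition Qprop (F : R -> Prop) (eps c : R) : Prop :=
  forall k, ((exists s, F s) -> / c * Rpower (INR m) (INR k * (dimB m F - eps)) <= INR (Nk m k F)) /\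
            INR (Nk m k F) <= c * Rpower (INR m) (INR k * (dimB m F + eps)).

Lemma Qprop_mono F eps c c' : 0 < c -> c <= c' -> Qprop F eps c -> Qprop F eps c'.
Proof.
  intros Hc Hcc HQ k. destruct (HQ k) as [H1 H2]. split.
  - intros Hne. specialize (H1 Hne).
    assert (/ c' <= / c) by (apply Rinv_le_contravar; lra).
    assert (0 < Rpower (INR m) (INR k * (dimB m F - eps))) by (unfold Rpower; apply exp_pos).
    nra.
  - assert (0 < Rpower (INR m) (INR k * (dimB m F + eps))) by (unfold Rpower; apply exp_pos). nra.
Qed.

Lemma Nk_ge1 g k : (exists s, T g s) -> (1 <= Nk m k (T g))%nat.
Proof.
  intros Hne. assert (h1 := Ck_pos m Hm k (T g) (T_sub01 g) Hne).
  assert (h2 := Ck_le_3Nk m Hm k (T g) (T_sub01 g)). lia.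
Qed.

Lemma Nk_lepow g k : (Nk m k (T g) <= m ^ k)%nat.
Proof.
  assert (h1 := Nk_le_Ck m Hm k (T g) (T_sub01 g)). assert (h2 := Ck_le_pow m k (T g)). lia.
Qed.

Lemma per_g g eps : 0 < eps -> exists c, 0 < c /\ Qprop (T g) eps c.
Proof.
  intros Heps.
  destruct (classic (exists s, T g s)) as [Hne|Hem].
  - destruct (Nat.eq_dec m 1) as [E1|E1].
    + exists 1. split; [lra|]. unfold Qprop; intros k. rewrite E1, dimB_m1.
      unfold Rpower. simpl (INR 1). rewrite ln_1, !Rmult_0_r, exp_0.
      assert (h1 := Nk_ge1 g k Hne). assert (h2 := Nk_lepow g k). rewrite E1, Nat.pow_1_l in h2.
      rewrite E1 in h1. assert (Nk 1 k (T g) = 1%nat) by lia. rewrite H. simpl. split; [intros; lra| lra].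
    + destruct (lim_T g ltac:(lia) Hne) as [d [Hd Hl]].
      assert (Ed : dimB m (T g) = d) by (unfold dimB; rewrite (is_lim_seq_unique _ _ Hl); auto).
      destruct (bounds_from_lim m (fun k => Nk m k (T g)) ltac:(lia) (fun k => Nk_ge1 g k Hne)
                  (Nk_lepow g) d Hd Hl eps Heps) as [c [Hc Hb]].
      exists c. split; auto. unfold Qprop; intros k. rewrite Ed. destruct (Hb k). split; auto.
  - exists 1. split; [lra|]. unfold Qprop; intros k. split; [intros; tauto|].
    rewrite (Nk_empty m Hm); [|intros s hs; apply Hem; eauto].
    assert (0 < Rpower (INR m) (INR k * (dimB m (T g) + eps))) by (unfold Rpower; apply exp_pos).
    simpl; lra.
Qed.

Lemma core eps : 0 < eps -> exists c, 0 < c /\ forall g, Qprop (T g) eps c.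
Proof.
  intros Heps.
  assert (Hl : forall l : list G, exists c, 0 < c /\ forall g, In g l -> Qprop (T g) eps c).
  { induction l as [|a l [c [Hc Hcl]]].
    - exists 1. split; [lra|]. intros g [].
    - destruct (per_g a eps Heps) as [ca [Hca Hqa]].
      exists (Rmax c ca). split; [apply (Rlt_le_trans _ c); auto; apply Rmax_l|].
      intros g [<-|Hin].
      + apply (Qprop_mono _ _ ca); auto. apply Rmax_r.
      + apply (Qprop_mono _ _ c); auto. apply Rmax_l. }
  destruct (Hl lG) as [c [Hc Hcl]]. exists c. split; auto.
  intros g. destruct (Hfin g) as [g' [Hin E]]. rewrite E. auto.
Qed.

Lemma dimB_img g L Y : (Y < m ^ L)%nat -> dimB m (img m L Y (T g)) = dimB m (T g).
Proof.
  intros HY.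
  destruct (Nat.eq_dec m 1) as [E1|E1]; [rewrite E1, !dimB_m1; auto|].
  destruct (classic (exists s, T g s)) as [Hne|Hem].
  2:{ f_equal. apply set_ext. intros s. split; [intros [s' [h _]]; exfalso; eauto| intros h; exfalso; eauto]. }
  destruct (lim_T g ltac:(lia) Hne) as [d [Hd Hl]].
  assert (Ed : dimB m (T g) = d) by (unfold dimB; rewrite (is_lim_seq_unique _ _ Hl); auto).
  rewrite Ed. unfold dimB.
  assert (Hl2 : is_lim_seq (fun k => ln (INR (Nk m k (img m L Y (T g)))) / (INR k * ln (INR m))) d).
  { apply (is_lim_seq_incr_n _ L).
    apply (lim_close _ _ d (INR L) Hl). intros k Hk.
    rewrite Nk_img; auto; [|apply T_sub01].
    assert (Hm1 : 1 < INR m) by (apply (lt_INR 1); lia).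
    assert (c0 : 0 < ln (INR m)) by (rewrite <- ln_1; apply ln_increasing; lra).
    assert (a0 : 0 < INR k) by (apply lt_0_INR; lia).
    assert (b0 : 0 <= INR L) by apply pos_INR.
    set (w := ln (INR (Nk m k (T g)))).
    assert (w0 : 0 <= w).
    { unfold w. rewrite <- ln_1. apply ln_le; [lra|]. apply (le_INR 1). apply Nk_ge1; auto. }
    assert (w1 : w <= INR k * ln (INR m)).
    { unfold w. rewrite <- ln_pow by lra. apply ln_le; [apply (lt_INR 0), Nk_ge1; auto|].
      rewrite <- pow_INR. apply le_INR, Nk_lepow. }
    rewrite plus_INR.
    set (a := INR k) in *. set (b := INR L) in *. set (c := ln (INR m)) in *.
    replace (w / ((a + b) * c) - w / (a * c)) with (- (w * b / (a * (a + b) * c))) by (field; lra).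
    rewrite Rabs_Ropp, Rabs_pos_eq.
    2:{ apply Rmult_le_pos; [nra| left; apply Rinv_0_lt_compat; apply Rmult_lt_0_compat; nra]. }
    apply (Rle_trans _ (a * c * b / (a * (a + b) * c))).
    + unfold Rdiv. apply Rmult_le_compat_r; [left; apply Rinv_0_lt_compat; apply Rmult_lt_0_compat; nra|]. nra.
    + replace (a * c * b / (a * (a + b) * c)) with (b / (a + b)) by (field; lra).
      unfold Rdiv. apply Rmult_le_compat_l; auto. apply Rinv_le_contravar; lra. }
  rewrite (is_lim_seq_unique _ _ Hl2). auto.
Qed.

End Core.

Definition flag := option (bool * bool).

Definition inI (a : bool * bool) (x : R) : Prop :=
  0 <= x <= 1 /\ (x = 0 -> fst a = true) /\ (x = 1 -> snd a = true).

Definition join (o1 o2 : flag) : flag :=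
  match o1, o2 with
  | None, o => o
  | Some a, None => Some a
  | Some (l1, r1), Some (l2, r2) => Some (orb l1 l2, orb r1 r2)
  end.

Lemma inI_or l1 r1 l2 r2 x :
  inI (orb l1 l2, orb r1 r2) x <-> inI (l1, r1) x \/ inI (l2, r2) x.
Proof.
  unfold inI; simpl. split.
  - intros [h0 [h1 h2]]. destruct (Req_dec x 0) as [e|e].
    + specialize (h1 e). apply orb_prop in h1. destruct h1; [left|right]; repeat split; auto; intros; lra.
    + destruct (Req_dec x 1) as [e'|e'].
      * specialize (h2 e'). apply orb_prop in h2. destruct h2; [left|right]; repeat split; auto; intros; lra.
      * left; repeat split; auto; intros; lra.
  - intros [[h0 [h1 h2]]|[h0 [h1 h2]]]; (split; [auto| split; intros e]);
      try (rewrite (h1 e)); try (rewrite (h2 e)); simpl; auto using orb_true_r.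
Qed.

Lemma join_inI o1 o2 x :
  (exists c, join o1 o2 = Some c /\ inI c x) <->
  (exists a, o1 = Some a /\ inI a x) \/ (exists b, o2 = Some b /\ inI b x).
Proof.
  destruct o1 as [[l1 r1]|]; destruct o2 as [[l2 r2]|]; simpl.
  - split.
    + intros [c [Ec Ic]]. inversion Ec; subst. apply inI_or in Ic.
      destruct Ic; [left|right]; eauto.
    + intros [[a [Ea Ia]]|[b [Eb Ib]]].
      * inversion Ea; subst. eexists; split; [reflexivity|]. apply inI_or; auto.
      * inversion Eb; subst. eexists; split; [reflexivity|]. apply inI_or; auto.
  - split.
    + intros [c [Ec Ic]]. left; eauto.
    + intros [[a [Ea Ia]]|[b [Eb Ib]]]; [eauto| discriminate].
  - split.
    + intros [c [Ec Ic]]. right; eauto.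
    + intros [[a [Ea Ia]]|[b [Eb Ib]]]; [discriminate| eauto].
  - split.
    + intros [c [Ec Ic]]; discriminate.
    + intros [[a [Ea Ia]]|[b [Eb Ib]]]; discriminate.
Qed.

Lemma nat_close (a b : nat) : INR a - INR b < 1 -> INR b - INR a < 1 -> a = b.
Proof.
  intros h1 h2. destruct (Nat.lt_total a b) as [h|[h|h]]; auto.
  - exfalso. assert (INR a + 1 <= INR b) by (rewrite <- S_INR; apply le_INR; lia). lra.
  - exfalso. assert (INR b + 1 <= INR a) by (rewrite <- S_INR; apply le_INR; lia). lra.
Qed.

Lemma inI_ff x : inI (false, false) x <-> 0 < x < 1.
Proof.
  unfold inI; simpl. split.
  - intros [[h0 h1] [h2 h3]]. split.
    + destruct h0 as [h0|h0]; auto. symmetry in h0. specialize (h2 h0). discriminate.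
    + destruct h1 as [h1|h1]; auto. specialize (h3 h1). discriminate.
  - intros [h0 h1]. repeat split; try lra; intros; lra.
Qed.

Section Geo.
Variables (V E : Type) (i t : E -> V) (n m : nat) (xl yl : E -> nat).
Variable X : V -> R * R -> Prop.
Variables (lV : list V) (lE : list E).
Hypothesis HlV : forall v, In v lV.
Hypothesis HlE : forall e, In e lE.
Hypothesis Hm : (0 < m)%nat.
Hypothesis Hnm : (m < n)%nat.
Hypothesis Hxl : forall e, (xl e < n)%nat.
Hypothesis Hyl : forall e, (yl e < m)%nat.
Hypothesis HXsq : forall v p, X v p -> in_unit_square p.
Hypothesis HXeq : forall v p, X v p <->
  exists e, i e = v /\ exists q, X (t e) q /\ p = psi_e n m (xl e) (yl e) q.

Definition TT (g : V -> flag) (s : R) : Prop :=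
  exists v a p, g v = Some a /\ X v p /\ inI a (fst p) /\ 0 < snd p < 1 /\ snd p = s.

Lemma TT01 g s : TT g s -> 0 < s < 1.
Proof. intros [v [a [p [_ [_ [_ [h e]]]]]]]. subst; auto. Qed.

Definition adj (a : bool * bool) (xe : nat) : bool * bool :=
  (if Nat.eqb xe 0 then fst a else true, if Nat.eqb xe (n - 1) then snd a else true).

Lemma inI_adj a xe x : (xe < n)%nat -> 0 <= x <= 1 ->
  (inI a ((x + INR xe) / INR n) <-> inI (adj a xe) x).
Proof.
  intros Hxe Hx.
  assert (HN : 0 < INR n) by (apply lt_0_INR; lia).
  assert (Hxe1 : INR xe <= INR n - 1) by (assert (INR (S xe) <= INR n) by (apply le_INR; lia); rewrite S_INR in H; lra).
  assert (Hxe0 : 0 <= INR xe) by apply pos_INR.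
  set (y := (x + INR xe) / INR n).
  assert (Ey : y * INR n = x + INR xe) by (unfold y; field; lra).
  assert (Hy : 0 <= y <= 1).
  { split.
    - unfold y. apply Rmult_le_pos; [lra| left; apply Rinv_0_lt_compat; lra].
    - apply (Rmult_le_reg_r (INR n)); auto. lra. }
  assert (E0 : y = 0 <-> x = 0 /\ xe = 0%nat).
  { split.
    - intros h. rewrite h in Ey. assert (x = 0) by lra. assert (INR xe = 0) by lra.
      split; auto. apply INR_eq. simpl. auto.
    - intros [h1 h2]. subst. simpl in Ey. assert (y * INR n = 0) by lra.
      apply Rmult_integral in H. destruct H; lra. }
  assert (E1 : y = 1 <-> x = 1 /\ xe = (n - 1)%nat).
  { split.
    - intros h. rewrite h in Ey. assert (x = 1) by lra. assert (INR xe = INR n - 1) by lra.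
      split; auto. apply INR_eq. rewrite minus_INR by lia. simpl. lra.
    - intros [h1 h2]. subst. rewrite minus_INR in Ey by lia. simpl in Ey.
      apply (Rmult_eq_reg_r (INR n)); lra. }
  fold y. unfold inI, adj.
  destruct (Nat.eqb_spec xe 0) as [e0|e0]; destruct (Nat.eqb_spec xe (n - 1)) as [e1|e1]; simpl;
    split; intros [h1 [h2 h3]]; repeat split; try lra; intros; try reflexivity; try tauto.
Qed.

Definition stepL (g : V -> flag) (d : nat) (v' : V) (l : list E) : flag :=
  fold_right (fun e acc =>
    if excluded_middle_informative (t e = v' /\ yl e = d) then
      match g (i e) with Some a => join (Some (adj a (xl e))) acc | None => acc end
    else acc) None l.

Definition step (g : V -> flag) (d : nat) (v' : V) : flag := stepL g d v' lE.

Lemma stepL_spec g d v' x l :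
  (exists c, stepL g d v' l = Some c /\ inI c x) <->
  exists e a, In e l /\ t e = v' /\ yl e = d /\ g (i e) = Some a /\ inI (adj a (xl e)) x.
Proof.
  induction l as [|e l IH].
  - simpl. split; [intros [c [h _]]; discriminate| intros [e [a [[] _]]]].
  - unfold stepL; cbn [fold_right]; fold (stepL g d v' l).
    destruct (excluded_middle_informative (t e = v' /\ yl e = d)) as [[Ht Hy]|Hn].
    + cbv beta iota. destruct (g (i e)) as [a|] eqn:Hg.
      * rewrite join_inI, IH. split.
        -- intros [[a0 [Ea Ia]]|[e' [a' [Hin R]]]].
           ++ injection Ea as <-. exists e, a. split; [left; auto|]. tauto.
           ++ exists e', a'. split; [right; auto|]. tauto.
        -- intros [e' [a' [[<-|Hin] [h1 [h2 [h3 h4]]]]]].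
           ++ left. rewrite Hg in h3. injection h3 as <-. eauto.
           ++ right. exists e', a'. split; [auto|]. tauto.
      * rewrite IH. split.
        -- intros [e' [a' [Hin R]]]. exists e', a'. split; [right; auto|]. tauto.
        -- intros [e' [a' [[<-|Hin] [h1 [h2 [h3 h4]]]]]].
           ++ rewrite Hg in h3; discriminate.
           ++ exists e', a'. split; [auto|]. tauto.
    + cbv beta iota. rewrite IH. split.
      * intros [e' [a' [Hin R]]]. exists e', a'. split; [right; auto|]. tauto.
      * intros [e' [a' [[<-|Hin] [h1 [h2 [h3 h4]]]]]].
        -- exfalso; auto.
        -- exists e', a'. split; [auto|]. tauto.
Qed.

Lemma step_zoom g d s : (d < m)%nat -> 0 < s < 1 ->
  (TT g ((s + INR d) / INR m) <-> TT (step g d) s).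
Proof.
  intros Hd Hs. assert (HM : 0 < INR m) by (apply lt_0_INR; lia).
  assert (Hd1 : INR d + 1 <= INR m) by (rewrite <- S_INR; apply le_INR; lia).
  assert (Hd0 : 0 <= INR d) by apply pos_INR.
  split.
  - intros [v [a [p [Hg [Xp [Ia [Hp01 Hps]]]]]]].
    destruct (proj1 (HXeq v p) Xp) as [e [Hie [q [Xq Epq]]]].
    destruct (HXsq _ _ Xq) as [[hq1 hq2] [hq3 hq4]].
    subst p. unfold psi_e in *; simpl in *.
    assert (E1 : snd q + INR (yl e) = s + INR d).
    { apply (Rmult_eq_reg_r (/ INR m)); [|apply Rinv_neq_0_compat; lra]. unfold Rdiv in Hps. lra. }
    assert (Hye : yl e = d) by (apply nat_close; lra).
    assert (Eqs : snd q = s) by (rewrite Hye in E1; lra).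
    assert (Ia' : inI (adj a (xl e)) (fst q)).
    { apply (proj1 (inI_adj a (xl e) (fst q) (Hxl e) (conj hq1 hq2))). exact Ia. }
    destruct (proj2 (stepL_spec g d (t e) (fst q) lE)) as [c [Hc Ic]].
    { exists e, a. split; [apply HlE|]. split; [auto|]. split; [auto|]. split; [subst v; auto| exact Ia']. }
    exists (t e), c, q. split; [exact Hc|]. split; [exact Xq|]. split; [exact Ic|]. split; lra.
  - intros [v' [c [q [Hst [Xq [Ic [Hq01 Hqs]]]]]]].
    destruct (HXsq _ _ Xq) as [[hq1 hq2] [hq3 hq4]].
    destruct (proj1 (stepL_spec g d v' (fst q) lE) (ex_intro _ c (conj Hst Ic))) as [e [a [_ [Ht [Hy [Hg Ia]]]]]].
    set (p := psi_e n m (xl e) (yl e) q).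
    exists (i e), a, p. split; [auto|]. split; [|split; [|split; [split|]]].
    + apply HXeq. exists e; split; auto. exists q; split; auto. subst v'; auto.
    + apply (proj2 (inI_adj a (xl e) (fst q) (Hxl e) (conj hq1 hq2))). exact Ia.
    + unfold p, psi_e; simpl. apply Rdiv_lt_0_compat; [|lra]. assert (0 <= INR (yl e)) by apply pos_INR. lra.
    + unfold p, psi_e; simpl. apply (Rmult_lt_reg_r (INR m)); auto.
      replace ((snd q + INR (yl e)) / INR m * INR m) with (snd q + INR (yl e)) by (field; lra).
      rewrite Hy. lra.
    + unfold p, psi_e; simpl. rewrite Hy, Hqs. auto.
Qed.

Lemma zoom_T1 g d : (d < m)%nat -> zoom m (TT g) 1 d = TT (step g d).
Proof.
  intros Hd. apply set_ext. intros s. unfold zoom, PhiI, Mp. simpl. rewrite Rmult_1_r. split.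
  - intros [Hs h]. apply step_zoom; auto.
  - intros h. assert (Hs := TT01 _ _ h). split; auto. apply step_zoom; auto.
Qed.

Fixpoint stepI (g : V -> flag) (L Y : nat) : V -> flag :=
  match L with
  | O => g
  | S L' => step (stepI g L' (Y / m)) (Y mod m)
  end.

Lemma zoom_T L : forall g Y, (Y < m ^ L)%nat -> zoom m (TT g) L Y = TT (stepI g L Y).
Proof.
  induction L as [|L IH]; intros g Y HY.
  - simpl in HY. assert (Y = 0%nat) by lia. subst. simpl. apply zoom_0. apply TT01.
  - simpl stepI.
    assert (HY1 : (Y / m < m ^ L)%nat).
    { apply Nat.div_lt_upper_bound; [lia|]. simpl in HY. lia. }
    assert (HY2 : (Y mod m < m)%nat) by (apply Nat.mod_upper_bound; lia).
    rewrite <- zoom_T1 by auto. rewrite <- IH by auto.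
    rewrite zoom_comp by (simpl; lia).
    replace (L + 1)%nat with (S L) by lia.
    replace (Y / m * m ^ 1 + Y mod m)%nat with Y; auto.
    simpl. rewrite Nat.mul_1_r. rewrite Nat.mul_comm. apply Nat.div_mod_eq.
Qed.


Definition flags : list flag :=
  None :: Some (true, true) :: Some (true, false) :: Some (false, true) :: Some (false, false) :: nil.

Lemma in_flags a : In a flags.
Proof. destruct a as [[[|] [|]]|]; simpl; tauto. Qed.

Fixpoint allL (k : nat) : list (list flag) :=
  match k with
  | O => nil :: nil
  | S k' => flat_map (fun l => map (fun a => a :: l) flags) (allL k')
  end.

Lemma in_allL l : In l (allL (length l)).
Proof.
  induction l as [|a l IH]; [simpl; auto|]. cbn [length allL].
  apply in_flat_map. exists l. split; auto. apply (in_map (fun a0 => a0 :: l)), in_flags.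
Qed.

Definition idx (v : V) : nat := epsilon (inhabits 0%nat) (fun k => nth_error lV k = Some v).

Definition gL (l : list flag) (v : V) : flag := nth (idx v) l None.

Lemma gL_map g v : gL (map g lV) v = g v.
Proof.
  unfold gL. assert (H : exists k, nth_error lV k = Some v) by (apply In_nth_error, HlV).
  assert (Hk := epsilon_spec (inhabits 0%nat) _ H). fold (idx v) in Hk.
  apply (map_nth_error g) in Hk. apply nth_error_nth. auto.
Qed.

Lemma TT_fin g : exists g', In g' (map gL (allL (length lV))) /\ TT g = TT g'.
Proof.
  exists (gL (map g lV)). split.
  - apply in_map. rewrite <- (length_map g lV). apply in_allL.
  - f_equal. apply functional_extensionality. intros v. symmetry. apply gL_map.
Qed.

Lemma TT_zoom g L Y : (Y < m ^ L)%nat -> exists g', zoom m (TT g) L Y = TT g'.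
Proof. intros HY. exists (stepI g L Y). apply zoom_T; auto. Qed.

Definition transfer_step (h : V -> Prop) (e : E) : V -> Prop :=
  fun v' => exists e', h (i e') /\ t e' = v' /\ xl e' = xl e /\ yl e' = yl e.

Fixpoint transfer (h : V -> Prop) (w : list E) : V -> Prop :=
  match w with nil => h | e :: w' => transfer (transfer_step h e) w' end.

Lemma psi_w_cons e w q : psi_w n m xl yl (e :: w) q = psi_e n m (xl e) (yl e) (psi_w n m xl yl w q).
Proof. reflexivity. Qed.

Lemma psi_e_open e q : open_square q -> open_square (psi_e n m (xl e) (yl e) q).
Proof.
  intros [[h1 h2] [h3 h4]]. unfold psi_e, open_square; simpl.
  assert (HN : 0 < INR n) by (apply lt_0_INR; lia). assert (HM : 0 < INR m) by (apply lt_0_INR; lia).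
  assert (INR (xl e) + 1 <= INR n) by (rewrite <- S_INR; apply le_INR, Hxl).
  assert (INR (yl e) + 1 <= INR m) by (rewrite <- S_INR; apply le_INR, Hyl).
  assert (0 <= INR (xl e)) by apply pos_INR. assert (0 <= INR (yl e)) by apply pos_INR.
  split; split.
  - apply Rdiv_lt_0_compat; lra.
  - apply (Rmult_lt_reg_r (INR n)); auto. unfold Rdiv. rewrite Rmult_assoc, Rinv_l by lra. lra.
  - apply Rdiv_lt_0_compat; lra.
  - apply (Rmult_lt_reg_r (INR m)); auto. unfold Rdiv. rewrite Rmult_assoc, Rinv_l by lra. lra.
Qed.

Lemma psi_w_open w q : open_square q -> open_square (psi_w n m xl yl w q).
Proof. induction w; intros h; [auto|]. rewrite psi_w_cons. apply psi_e_open; auto. Qed.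

Lemma psi_e_inj e e' r q : open_square r -> in_unit_square q ->
  psi_e n m (xl e) (yl e) r = psi_e n m (xl e') (yl e') q ->
  xl e = xl e' /\ yl e = yl e' /\ r = q.
Proof.
  intros [[r1 r2] [r3 r4]] [[q1 q2] [q3 q4]] H. unfold psi_e in H. injection H as H1 H2.
  assert (HN : 0 < INR n) by (apply lt_0_INR; lia). assert (HM : 0 < INR m) by (apply lt_0_INR; lia).
  assert (E1 : fst r + INR (xl e) = fst q + INR (xl e')).
  { apply (Rmult_eq_reg_r (/ INR n)); [|apply Rinv_neq_0_compat; lra]. unfold Rdiv in H1. lra. }
  assert (E2 : snd r + INR (yl e) = snd q + INR (yl e')).
  { apply (Rmult_eq_reg_r (/ INR m)); [|apply Rinv_neq_0_compat; lra]. unfold Rdiv in H2. lra. }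
  assert (X1 : xl e = xl e') by (apply nat_close; lra).
  assert (Y1 : yl e = yl e') by (apply nat_close; lra).
  split; auto. split; auto. rewrite X1 in E1. rewrite Y1 in E2.
  destruct r, q; simpl in *. f_equal; lra.
Qed.

Lemma claim2D w : forall h p,
  (exists v0, h v0 /\ X v0 p /\ exists q, open_square q /\ p = psi_w n m xl yl w q) <->
  (exists q, open_square q /\ (exists v', transfer h w v' /\ X v' q) /\ p = psi_w n m xl yl w q).
Proof.
  induction w as [|e w IH]; intros h p.
  - simpl. split.
    + intros [v0 [hv [Xp [q [Hq ->]]]]]. exists q; split; auto. split; auto. exists v0; auto.
    + intros [q [Hq [[v' [hv Xq]] ->]]]. exists v'; split; auto. split; auto. exists q; auto.
  - cbn [transfer]. split.
    + intros [v0 [hv [Xp [q [Hq Hp]]]]].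
      rewrite psi_w_cons in Hp.
      destruct (proj1 (HXeq v0 p) Xp) as [e' [Hie [q' [Xq' Ep]]]].
      assert (Hr := psi_w_open w q Hq).
      rewrite Hp in Ep.
      destruct (psi_e_inj e e' _ q' Hr (HXsq _ _ Xq') Ep) as [ex [ey Er]].
      destruct (proj1 (IH (transfer_step h e) (psi_w n m xl yl w q))) as [q2 [Hq2 [Hv2 E2]]].
      { exists (t e'). split; [exists e'; subst v0; repeat split; auto|]. split; [rewrite Er; auto|].
        exists q; auto. }
      exists q2. split; auto. split; auto. rewrite psi_w_cons, <- E2. auto.
    + intros [q [Hq [Hv Hp]]]. rewrite psi_w_cons in Hp.
      destruct (proj2 (IH (transfer_step h e) (psi_w n m xl yl w q))) as [v1 [[e' [h1 [h2 [h3 h4]]]] [Xr _]]].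
      { exists q; auto. }
      exists (i e'). split; auto. split.
      * apply HXeq. exists e'. split; auto. exists (psi_w n m xl yl w q). split; [subst v1; auto|].
        rewrite Hp, h3, h4. auto.
      * exists q. split; auto.
Qed.

Fixpoint wint (w : list E) : nat :=
  match w with nil => 0%nat | e :: w' => (yl e * m ^ length w' + wint w')%nat end.

Lemma wint_lt w : (wint w < m ^ length w)%nat.
Proof.
  induction w as [|e w IH]; simpl; [lia|]. assert (H := Hyl e). nia.
Qed.

Lemma snd_psi_w w q : snd (psi_w n m xl yl w q) = phi_w m yl w (snd q).
Proof. induction w as [|e w IH]; simpl; auto. rewrite <- IH. reflexivity. Qed.

Lemma phi_w_PhiI w s : phi_w m yl w s = PhiI m (length w) (wint w) s.
Proof.
  induction w as [|e w IH].
  - simpl. unfold PhiI, Mp; simpl. field.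
  - change (phi_w m yl (e :: w) s) with (phi_e m (yl e) (phi_w m yl w s)).
    rewrite IH. simpl length. simpl wint. change (S (length w)) with (1 + length w)%nat.
    rewrite <- (PhiI_comp m Hm 1 (yl e) (length w) (wint w) s). unfold phi_e.
    unfold PhiI, Mp. assert (0 < INR m) by (apply lt_0_INR; lia). assert (0 < INR m ^ length w) by (apply pow_lt; lra). simpl pow. field; repeat split; lra.
Qed.

Definition gw (v : V) (w : list E) : V -> flag :=
  fun v' => if excluded_middle_informative (transfer (fun u => u = v) w v') then Some (false, false) else None.

Lemma piece_rep v w : piece n m xl yl (X v) w = img m (length w) (wint w) (TT (gw v w)).
Proof.
  apply set_ext. intros s. unfold piece, img. split.
  - intros [p [Xp [[q [Hq Hpq]] Hps]]].
    destruct (proj1 (claim2D w (fun u => u = v) p)) as [q' [Hq' [[v' [Htr Xq']] Ep]]].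
    { exists v; split; auto. split; auto. exists q; auto. }
    exists (snd q'). split.
    + exists v', (false, false), q'. split.
      * unfold gw. destruct excluded_middle_informative; tauto.
      * split; auto. split; [apply inI_ff; apply Hq'|]. split; [apply Hq'| auto].
    + rewrite <- Hps, Ep, snd_psi_w, phi_w_PhiI. auto.
  - intros [s' [[v' [a [q [Hg [Xq [Ia [Hq01 Hqs]]]]]]] Hs]].
    unfold gw in Hg. destruct excluded_middle_informative as [Htr|]; [|discriminate].
    injection Hg as <-. apply inI_ff in Ia.
    assert (Hq : open_square q) by (split; auto).
    destruct (proj2 (claim2D w (fun u => u = v) (psi_w n m xl yl w q))) as [v0 [-> [Xp _]]].
    { exists q. split; auto. split; auto. exists v'; auto. }
    exists (psi_w n m xl yl w q). split; auto. split; [exists q; auto|].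
    rewrite snd_psi_w, phi_w_PhiI, Hqs. auto.
Qed.


Fixpoint yint (y : list nat) : nat :=
  match y with nil => 0%nat | d :: y' => (d * m ^ length y' + yint y')%nat end.

Lemma yint_lt y : (forall d, In d y -> (d < m)%nat) -> (yint y < m ^ length y)%nat.
Proof.
  induction y as [|d y IH]; intros H; simpl; [lia|].
  assert (d < m)%nat by (apply H; left; auto).
  assert (yint y < m ^ length y)%nat by (apply IH; intros; apply H; right; auto). nia.
Qed.

Lemma adic_eq y : adic m y = INR (yint y) / Mp m (length y).
Proof.
  assert (HM : 0 < INR m) by (apply lt_0_INR; lia).
  induction y as [|d y IH]; simpl.
  - unfold Mp; simpl. field.
  - rewrite IH. rewrite plus_INR, mult_INR, <- Mp_INR by auto. unfold Mp; simpl.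
    assert (0 < INR m ^ length y) by (apply pow_lt; lra). field; repeat split; lra.
Qed.

Lemma I_y_char y u : I_y m y u <-> exists u', 0 < u' < 1 /\ u = PhiI m (length y) (yint y) u'.
Proof.
  assert (HM := Mp_pos m Hm (length y)).
  unfold I_y. rewrite adic_eq. fold (Mp m (length y)). unfold PhiI. split.
  - intros [h1 h2]. exists (u * Mp m (length y) - INR (yint y)). split.
    + split.
      * unfold Rdiv in h1. assert (INR (yint y) < u * Mp m (length y)).
        { apply (Rmult_lt_reg_r (/ Mp m (length y))); [apply Rinv_0_lt_compat; auto|].
          replace (u * Mp m (length y) * / Mp m (length y)) with u by (field; lra). auto. }
        lra.
      * assert (u * Mp m (length y) < INR (yint y) + 1).
        { apply (Rmult_lt_reg_r (/ Mp m (length y))); [apply Rinv_0_lt_compat; auto|].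
          replace (u * Mp m (length y) * / Mp m (length y)) with u by (field; lra).
          replace ((INR (yint y) + 1) * / Mp m (length y)) with (INR (yint y) / Mp m (length y) + / Mp m (length y)) by (field; lra).
          auto. }
        lra.
    + field. lra.
  - intros [u' [[h1 h2] ->]]. split.
    + unfold Rdiv. apply Rmult_lt_compat_r; [apply Rinv_0_lt_compat; auto| lra].
    + replace (INR (yint y) / Mp m (length y) + / Mp m (length y)) with ((INR (yint y) + 1) / Mp m (length y)) by (field; lra).
      unfold Rdiv. apply Rmult_lt_compat_r; [apply Rinv_0_lt_compat; auto| lra].
Qed.

Lemma PhiI_inj L Y a b : PhiI m L Y a = PhiI m L Y b -> a = b.
Proof.
  unfold PhiI. intros H. assert (HM := Mp_pos m Hm L).
  apply (Rmult_eq_compat_r (Mp m L)) in H.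
  replace ((a + INR Y) / Mp m L * Mp m L) with (a + INR Y) in H by (field; lra).
  replace ((b + INR Y) / Mp m L * Mp m L) with (b + INR Y) in H by (field; lra). lra.
Qed.

Lemma piece_y_rep v w y : (forall d, In d y -> (d < m)%nat) ->
  piece_y n m xl yl (X v) w y =
  img m (length w + length y) (wint w * m ^ length y + yint y) (TT (stepI (gw v w) (length y) (yint y))).
Proof.
  intros Hyd. assert (HY := yint_lt y Hyd).
  apply set_ext. intros s. unfold piece_y. rewrite piece_rep. rewrite <- zoom_T by auto.
  unfold img, zoom. split.
  - intros [[s' [Ts' Hs]] [u [Iu Hsu]]]. rewrite phi_w_PhiI in Hsu.
    assert (Es : s' = u) by (apply (PhiI_inj (length w) (wint w)); congruence). subst s'.
    apply I_y_char in Iu. destruct Iu as [u' [Hu' ->]].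
    exists u'. split; [split; auto|]. rewrite Hs, PhiI_comp by auto. auto.
  - intros [u' [[Hu' Tu'] Hs]]. split.
    + exists (PhiI m (length y) (yint y) u'). split; auto. rewrite Hs, PhiI_comp by auto. auto.
    + exists (PhiI m (length y) (yint y) u'). split; [apply I_y_char; eauto|].
      rewrite phi_w_PhiI, Hs, PhiI_comp by auto. auto.
Qed.

Lemma labels_same w' : forall w, map xl w' = map xl w -> map yl w' = map yl w ->
  (forall q, psi_w n m xl yl w' q = psi_w n m xl yl w q) /\ (forall s, phi_w m yl w' s = phi_w m yl w s).
Proof.
  induction w' as [|e w' IH]; intros w Hx Hy; destruct w as [|e2 w]; simpl in *; try discriminate.
  - split; auto.
  - injection Hx as Hx1 Hx2. injection Hy as Hy1 Hy2. destruct (IH w Hx2 Hy2) as [H1 H2].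
    split; intros; [rewrite H1, Hx1, Hy1| rewrite H2, Hy1]; auto.
Qed.

Lemma piece_lab v w w' : map xl w' = map xl w -> map yl w' = map yl w ->
  piece n m xl yl (X v) w' = piece n m xl yl (X v) w.
Proof.
  intros Hx Hy. destruct (labels_same w' w Hx Hy) as [H1 _].
  apply set_ext. intros s. unfold piece. split.
  - intros [p [Xp [[q [Hq Ep]] Hs]]]. exists p. split; auto. split; auto. exists q. rewrite <- H1. auto.
  - intros [p [Xp [[q [Hq Ep]] Hs]]]. exists p. split; auto. split; auto. exists q. rewrite H1. auto.
Qed.

Lemma piece_y_lab v w w' y : map xl w' = map xl w -> map yl w' = map yl w ->
  piece_y n m xl yl (X v) w' y = piece_y n m xl yl (X v) w y.
Proof.
  intros Hx Hy. destruct (labels_same w' w Hx Hy) as [_ H2].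
  unfold piece_y. rewrite (piece_lab v w w' Hx Hy).
  apply set_ext. intros s. split.
  - intros [h [u [Iu Ep]]]. split; auto. exists u. rewrite <- H2. auto.
  - intros [h [u [Iu Ep]]]. split; auto. exists u. rewrite H2. auto.
Qed.

Lemma eta_eq v w : word_from i t v w ->
  eta i t n m xl yl X v (map xl w) (map yl w) = dimB m (piece n m xl yl (X v) w).
Proof.
  intros Hw. unfold eta. destruct excluded_middle_informative as [H|H].
  - destruct (constructive_indefinite_description _ H) as [w' [Hw' [Hx Hy]]]. simpl.
    rewrite (piece_lab v w w' Hx Hy). auto.
  - exfalso. apply H. exists w. repeat split; auto; apply Hw.
Qed.

Lemma theta_eq v w y : word_from i t v w -> y <> nil ->
  theta i t n m xl yl X v (map xl w) (map yl w) y = dimB m (piece_y n m xl yl (X v) w y).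
Proof.
  intros Hw Hy. destruct y as [|d y']; [contradiction|]. unfold theta.
  destruct excluded_middle_informative as [H|H].
  - destruct (constructive_indefinite_description _ H) as [w' [Hw' [Hx Hy']]]. simpl.
    rewrite (piece_y_lab v w w' (d :: y') Hx Hy'). auto.
  - exfalso. apply H. exists w. repeat split; auto; apply Hw.
Qed.

Lemma main_geo : forall eps, 0 < eps ->
  exists c1, 0 < c1 /\
  forall (v : V) (w : list E) (k : nat) (y : list nat),
    word_from i t v w -> (1 <= k)%nat ->
    y <> nil -> (forall d, In d y -> (d < m)%nat) ->
    let F := piece n m xl yl (X v) w in
    let et := eta i t n m xl yl X v (map xl w) (map yl w) in
    let th := theta i t n m xl yl X v (map xl w) (map yl w) y in
    ((exists s, F s) ->
       / c1 * Rpower (INR m) (INR k * (et - eps)) <= INR (Nk m (k + length w) F)) /\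
    INR (Nk m (k + length w) F) <= c1 * Rpower (INR m) (INR k * (et + eps)) /\
    ((exists s, piece_y n m xl yl (X v) w y s) ->
       / c1 * Rpower (INR m) (INR k * (th - eps))
         <= INR (Nk m (k + length w + length y) (piece_y n m xl yl (X v) w y)) /\
       INR (Nk m (k + length w + length y) (piece_y n m xl yl (X v) w y))
         <= c1 * Rpower (INR m) (INR k * (th + eps))).
Proof.
  intros eps Heps.
  destruct (core m Hm (V -> flag) TT TT01 TT_zoom (map gL (allL (length lV))) TT_fin eps Heps) as [c [Hc HQ]].
  exists c. split; auto.
  intros v w k y Hw Hk Hy Hyd. cbv zeta.
  rewrite eta_eq, theta_eq by auto.
  assert (HW := wint_lt w). assert (HY := yint_lt y Hyd).
  assert (HWY : (wint w * m ^ length y + yint y < m ^ (length w + length y))%nat).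
  { rewrite Nat.pow_add_r. nia. }
  rewrite !piece_rep. rewrite !piece_y_rep by auto.
  rewrite (dimB_img m Hm (V -> flag) TT TT01 TT_zoom _ TT_fin) by auto.
  rewrite (dimB_img m Hm (V -> flag) TT TT01 TT_zoom _ TT_fin) by auto.
  rewrite (Nk_img m Hm) by (auto; apply (T_sub01 (V -> flag) TT TT01)).
  rewrite <- Nat.add_assoc.
  rewrite (Nk_img m Hm) by (auto; apply (T_sub01 (V -> flag) TT TT01)).
  destruct (HQ (gw v w) k) as [A1 A2].
  destruct (HQ (stepI (gw v w) (length y) (yint y)) k) as [B1 B2].
  split; [|split; auto].
  - intros [s [s' [h _]]]. apply A1. eauto.
  - intros [s [s' [h _]]]. split; auto. apply B1. eauto.
Qed.

End Geo.

Theorem lemma2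
  (V E : Type) (i t : E -> V)
  (HVfin : exists lV : list V, forall v, In v lV)
  (HEfin : exists lE : list E, forall e, In e lE)
  (Hout : forall v, exists e, i e = v)
  (n m : nat) (Hm : (0 < m)%nat) (Hnm : (m < n)%nat)
  (xl yl : E -> nat)
  (Hxl : forall e, (xl e < n)%nat) (Hyl : forall e, (yl e < m)%nat)
  (X : V -> R * R -> Prop)
  (HXsq : forall v p, X v p -> in_unit_square p)
  (HXcl : forall v, closed2 (X v))
  (HXne : forall v, exists p, X v p)
  (HXeq : forall v p, X v p <->
            exists e, i e = v /\ exists q, X (t e) q /\ p = psi_e n m (xl e) (yl e) q) :
  forall eps, 0 < eps ->
  exists c1, 0 < c1 /\
  forall (v : V) (w : list E) (k : nat) (y : list nat),
    word_from i t v w -> (1 <= k)%nat ->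
    y <> nil -> (forall d, In d y -> (d < m)%nat) ->
    let F := piece n m xl yl (X v) w in
    let et := eta i t n m xl yl X v (map xl w) (map yl w) in
    let th := theta i t n m xl yl X v (map xl w) (map yl w) y in
    ((exists s, F s) ->
       / c1 * Rpower (INR m) (INR k * (et - eps)) <= INR (Nk m (k + length w) F)) /\
    INR (Nk m (k + length w) F) <= c1 * Rpower (INR m) (INR k * (et + eps)) /\
    ((exists s, piece_y n m xl yl (X v) w y s) ->
       / c1 * Rpower (INR m) (INR k * (th - eps))
         <= INR (Nk m (k + length w + length y) (piece_y n m xl yl (X v) w y)) /\
       INR (Nk m (k + length w + length y) (piece_y n m xl yl (X v) w y))
         <= c1 * Rpower (INR m) (INR k * (th + eps))).
Proof.
  destruct HVfin as [lV HlV]. destruct HEfin as [lE HlE].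
  exact (main_geo V E i t n m xl yl X lV lE HlV HlE Hm Hnm Hxl Hyl HXsq HXeq).
Qed.
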